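(* Let $a,b,c,\alpha\in\mathbb{R}$ with $\alpha\neq 0$ and $b\neq 0$, and let $\Omega\subset\mathbb{R}$ be a compact interval containing $0$ in its interior. Consider the control system on $\mathbb{R}^2$ $$\dot s=\omega b,\qquad \dot t=\tfrac12\alpha s^2+\omega(c+as),\qquad \omega\in\Omega,$$ with drift $f_0(s,t)=(0,\tfrac12\alpha s^2)$. Then the control sets of this system are exactly the one-point sets given by the singularities of the drift, namely the singletons $\{(0,t)\}$, $t\in\mathbb{R}$.
   Context: Controls are piecewise constant functions $\omega:\mathbb{R}\to\Omega$; $\varphi(\tau,\mathbf v,\omega)$ is the solution at time $\tau$ from $\mathbf v$, and $\mathcal O^+(\mathbf v)$ is the set of points reachable from $\mathbf v$ in nonnegative time. A control set is a nonempty set $\mathcal C\subset\mathbb{R}^2$, maximal with respect to inclusion, such that (i) for every $x\in\mathcal C$ there is a control $\omega$ with $\varphi(\tau,x,\omega)\in\mathcal C$ for all $\tau\ge0$, and (ii) $\mathcal C\subset\overline{\mathcal O^+(x)}$ for all $x\in\mathcal C$. This is the singular linear control system on $(\mathbb{R}\mathbf e_1\times\{0\})\backslash\mathbb{H}\simeq\mathbb{R}^2$ with $\alpha\neq0$, $\lambda=\beta=\gamma=0$. *)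

(* Defs.v *)
From Stdlib Require Import Reals Lra List.
From Coquelicot Require Import Coquelicot.
Open Scope R_scope.

Definition pt := (R * R)%type.

Definition rhs_s (b : R) (p : pt) (w : R) : R := w * b.
Definition rhs_t (a c alpha : R) (p : pt) (w : R) : R :=
  / 2 * alpha * (fst p) ^ 2 + w * (c + a * fst p).

(* Admissible controls: piecewise constant functions R -> Omega = [wmin, wmax]:
   on every compact interval [lo, hi] there are finitely many switching times
   (a list l) such that omega is constant between consecutive switching times. *)
Definition piecewise_constant (omega : R -> R) : Prop :=
  forall lo hi : R, exists l : list R,
    forall r1 r2 : R, lo <= r1 <= hi -> lo <= r2 <= hi ->
      (forall z, In z l -> ~ (Rmin r1 r2 <= z <= Rmax r1 r2)) ->
      omega r1 = omega r2.

Definition admissible (wmin wmax : R) (omega : R -> R) : Prop :=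
  piecewise_constant omega /\ forall r, wmin <= omega r <= wmax.

Definition is_solution (a b c alpha : R) (omega : R -> R) (v : pt) (x : R -> pt) : Prop :=
  forall tau : R,
    is_RInt (fun r => rhs_s b (x r) (omega r)) 0 tau (fst (x tau) - fst v) /\
    is_RInt (fun r => rhs_t a c alpha (x r) (omega r)) 0 tau (snd (x tau) - snd v).

Definition reach_plus (a b c alpha wmin wmax : R) (v : pt) (p : pt) : Prop :=
  exists (omega : R -> R) (x : R -> pt) (tau : R),
    admissible wmin wmax omega /\ is_solution a b c alpha omega v x /\
    0 <= tau /\ x tau = p.

(* Closure in R^2 (box neighbourhoods generate the usual topology). *)
Definition closure2 (A : pt -> Prop) (p : pt) : Prop :=
  forall eps : R, 0 < eps -> exists q, A q /\
    Rabs (fst p - fst q) < eps /\ Rabs (snd p - snd q) < eps.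

Definition ctrl_invariant (a b c alpha wmin wmax : R) (C : pt -> Prop) : Prop :=
  forall p, C p -> exists (omega : R -> R) (x : R -> pt),
    admissible wmin wmax omega /\ is_solution a b c alpha omega p x /\
    forall tau, 0 <= tau -> C (x tau).

Definition approx_ctrl (a b c alpha wmin wmax : R) (C : pt -> Prop) : Prop :=
  forall p, C p -> forall q, C q -> closure2 (reach_plus a b c alpha wmin wmax p) q.

Definition ctrl_candidate (a b c alpha wmin wmax : R) (C : pt -> Prop) : Prop :=
  (exists p, C p) /\ ctrl_invariant a b c alpha wmin wmax C /\
  approx_ctrl a b c alpha wmin wmax C.

Definition control_set (a b c alpha wmin wmax : R) (C : pt -> Prop) : Prop :=
  ctrl_candidate a b c alpha wmin wmax C /\
  forall D : pt -> Prop, ctrl_candidate a b c alpha wmin wmax D ->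
    (forall p, C p -> D p) -> forall p, D p -> C p.

(* Main.v *)
Require Import Defs.
From Stdlib Require Import Reals Lra List.
From Coquelicot Require Import Coquelicot.
Open Scope R_scope.

Ltac simplR := unfold minus, plus, opp, scal, norm, zero in *; simpl in *; unfold mult, abs in *; simpl in *.

Lemma is_RInt_val (f : R -> R) u w l l' : is_RInt f u w l -> l = l' -> is_RInt f u w l'.
Proof. intros H ->; exact H. Qed.

Lemma int_between (f : R -> R) (g : R -> R) :
  (forall tau, is_RInt f 0 tau (g tau)) -> forall u w, is_RInt f u w (g w - g u).
Proof.
  intros H u w. pose proof (is_RInt_swap _ _ _ _ (H u)) as Hu.
  pose proof (is_RInt_Chasles _ _ _ _ _ _ Hu (H w)) as Hc.
  eapply is_RInt_val; [exact Hc|]. simplR. ring.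
Qed.

Lemma sol_s a b c alpha om v x : is_solution a b c alpha om v x ->
  forall u w, is_RInt (fun r => rhs_s b (x r) (om r)) u w (fst (x w) - fst (x u)).
Proof.
  intros H u w. eapply is_RInt_val.
  - apply (int_between _ (fun tau => fst (x tau) - fst v)). intro tau; apply (H tau).
  - simpl. ring.
Qed.

Lemma sol_t a b c alpha om v x : is_solution a b c alpha om v x ->
  forall u w, is_RInt (fun r => rhs_t a c alpha (x r) (om r)) u w (snd (x w) - snd (x u)).
Proof.
  intros H u w. eapply is_RInt_val.
  - apply (int_between _ (fun tau => snd (x tau) - snd v)). intro tau; apply (H tau).
  - simpl. ring.
Qed.

Lemma affine_s a b c alpha om v x u w k : is_solution a b c alpha om v x -> u <= w ->
  (forall r, u < r < w -> om r = k) ->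
  forall r, u <= r <= w -> fst (x r) = fst (x u) + k * b * (r - u).
Proof.
  intros H huw hk r hr.
  pose proof (sol_s _ _ _ _ _ _ _ H u r) as H1.
  assert (H2 : is_RInt (fun _ => k * b) u r (fst (x r) - fst (x u))).
  { eapply is_RInt_ext; [|exact H1]. intros y hy. unfold rhs_s.
    rewrite Rmin_left in hy by lra. rewrite Rmax_right in hy by lra.
    rewrite hk by lra. reflexivity. }
  pose proof (is_RInt_const u r (k * b)) as H3.
  apply (@is_RInt_unique R_CompleteNormedModule) in H2. apply (@is_RInt_unique R_CompleteNormedModule) in H3.
  rewrite H2 in H3. simplR. lra.
Qed.

Lemma P_base a b c alpha om v x u w k : b <> 0 -> is_solution a b c alpha om v x -> u <= w ->
  (forall r, u < r < w -> om r = k) ->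
  is_RInt (fun r => om r * fst (x r)) u w ((fst (x w) ^ 2 - fst (x u) ^ 2) / (2 * b)).
Proof.
  intros hb H huw hk.
  pose proof (affine_s _ _ _ _ _ _ _ _ _ _ H huw hk) as Ha.
  set (s0 := fst (x u)) in *.
  pose proof (is_RInt_derive (fun r => k * s0 * (r - u) + k ^ 2 * b * (r - u) ^ 2 / 2)
     (fun r => k * (s0 + k * b * (r - u))) u w) as HD.
  assert (HD' : is_RInt (fun r => k * (s0 + k * b * (r - u))) u w
     (minus (k * s0 * (w - u) + k ^ 2 * b * (w - u) ^ 2 / 2)
            (k * s0 * (u - u) + k ^ 2 * b * (u - u) ^ 2 / 2))).
  { apply HD.
    - intros y _. auto_derive; [exact I|]. field.
    - intros y _. apply (@ex_derive_continuous R_AbsRing R_NormedModule). auto_derive. exact I. }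
  apply (is_RInt_ext _ (fun r => om r * fst (x r))) in HD'.
  2:{ intros y hy. rewrite Rmin_left in hy by lra. rewrite Rmax_right in hy by lra.
      rewrite hk by lra. rewrite (Ha y) by lra. reflexivity. }
  eapply is_RInt_val; [exact HD'|]. rewrite (Ha w) by lra. simplR. field. exact hb.
Qed.

Lemma P_list a b c alpha om v x : b <> 0 -> is_solution a b c alpha om v x ->
  forall l u w, u <= w ->
  (forall r1 r2, u < r1 < w -> u < r2 < w ->
     (forall z, In z l -> ~ (Rmin r1 r2 <= z <= Rmax r1 r2)) -> om r1 = om r2) ->
  is_RInt (fun r => om r * fst (x r)) u w ((fst (x w) ^ 2 - fst (x u) ^ 2) / (2 * b)).
Proof.
  intros hb H l. induction l as [|z l IH]; intros u w huw hyp.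
  - destruct (Req_dec u w) as [<-|hne].
    + eapply is_RInt_val; [apply is_RInt_point|]. simplR. field. exact hb.
    + apply (P_base _ _ _ _ _ _ _ _ _ (om ((u + w) / 2)) hb H huw).
      intros r hr. apply hyp; try lra. intros z hz; destruct hz.
  - destruct (Rlt_dec u z) as [h1|h1]; [destruct (Rlt_dec z w) as [h2|h2]|].
    + assert (A : is_RInt (fun r => om r * fst (x r)) u z ((fst (x z) ^ 2 - fst (x u) ^ 2) / (2 * b))).
      { apply IH; [lra|]. intros r1 r2 hr1 hr2 hz. apply hyp; try lra.
        intros z0 [<-|hz0].
        - intro hc. destruct hc as [_ hc]. unfold Rmax in hc; destruct (Rle_dec r1 r2); lra.
        - apply hz; exact hz0. }
      assert (B : is_RInt (fun r => om r * fst (x r)) z w ((fst (x w) ^ 2 - fst (x z) ^ 2) / (2 * b))).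
      { apply IH; [lra|]. intros r1 r2 hr1 hr2 hz. apply hyp; try lra.
        intros z0 [<-|hz0].
        - intro hc. destruct hc as [hc _]. unfold Rmin in hc; destruct (Rle_dec r1 r2); lra.
        - apply hz; exact hz0. }
      eapply is_RInt_val; [exact (is_RInt_Chasles _ _ _ _ _ _ A B)|]. simplR. field. exact hb.
    + apply IH; [lra|]. intros r1 r2 hr1 hr2 hz. apply hyp; try lra.
      intros z0 [<-|hz0].
      * intro hc. unfold Rmin, Rmax in hc; destruct (Rle_dec r1 r2); lra.
      * apply hz; exact hz0.
    + apply IH; [lra|]. intros r1 r2 hr1 hr2 hz. apply hyp; try lra.
      intros z0 [<-|hz0].
      * intro hc. unfold Rmin, Rmax in hc; destruct (Rle_dec r1 r2); lra.
      * apply hz; exact hz0.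
Qed.

Lemma P_glob a b c alpha wmin wmax om v x u w : b <> 0 -> admissible wmin wmax om ->
  is_solution a b c alpha om v x -> u <= w ->
  is_RInt (fun r => om r * fst (x r)) u w ((fst (x w) ^ 2 - fst (x u) ^ 2) / (2 * b)).
Proof.
  intros hb [hpc _] H huw. destruct (hpc u w) as [l hl].
  apply (P_list _ _ _ _ _ _ _ hb H l u w huw).
  intros r1 r2 h1 h2 hz. apply hl; try lra; exact hz.
Qed.

Definition V (a b c alpha : R) (p : pt) : R :=
  2 / alpha * (snd p - c / b * fst p - a / (2 * b) * (fst p) ^ 2).

Lemma V_int a b c alpha wmin wmax om v x u w : alpha <> 0 -> b <> 0 -> admissible wmin wmax om ->
  is_solution a b c alpha om v x -> u <= w ->
  is_RInt (fun r => (fst (x r)) ^ 2) u w (V a b c alpha (x w) - V a b c alpha (x u)).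
Proof.
  intros ha hb hadm H huw.
  pose proof (P_glob _ _ _ _ _ _ _ _ _ _ _ hb hadm H huw) as HP.
  pose proof (sol_s _ _ _ _ _ _ _ H u w) as Hs.
  pose proof (sol_t _ _ _ _ _ _ _ H u w) as Ht.
  pose proof (is_RInt_minus _ _ _ _ _ _ Ht (is_RInt_scal _ _ _ (c / b) _ Hs)) as H1.
  pose proof (is_RInt_minus _ _ _ _ _ _ H1 (is_RInt_scal _ _ _ a _ HP)) as H2.
  pose proof (is_RInt_scal _ _ _ (2 / alpha) _ H2) as H3.
  apply (is_RInt_ext _ (fun r => (fst (x r)) ^ 2)) in H3.
  - eapply is_RInt_val; [exact H3|]. unfold V. simplR. field. split; assumption.
  - intros y _. unfold rhs_s, rhs_t. simplR. field. split; assumption.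
Qed.

Lemma V_mono a b c alpha wmin wmax om v x u w : alpha <> 0 -> b <> 0 -> admissible wmin wmax om ->
  is_solution a b c alpha om v x -> u <= w ->
  V a b c alpha (x u) <= V a b c alpha (x w).
Proof.
  intros ha hb hadm H huw.
  pose proof (V_int _ _ _ _ _ _ _ _ _ _ _ ha hb hadm H huw) as HI.
  apply is_RInt_ge_0 in HI; [lra|lra|]. intros y _. apply pow2_ge_0.
Qed.

Lemma V_lower a b c alpha wmin wmax om v x u w m : alpha <> 0 -> b <> 0 -> admissible wmin wmax om ->
  is_solution a b c alpha om v x -> u <= w -> 0 <= m ->
  (forall r, u <= r <= w -> m <= Rabs (fst (x r))) ->
  V a b c alpha (x u) + m ^ 2 * (w - u) <= V a b c alpha (x w).
Proof.
  intros ha hb hadm H huw hm hr.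
  pose proof (V_int _ _ _ _ _ _ _ _ _ _ _ ha hb hadm H huw) as HI.
  pose proof (is_RInt_const u w (m ^ 2)) as HC.
  pose proof (is_RInt_le _ _ _ _ _ _ huw HC HI) as HL.
  simplR. cut ((w - u) * m ^ 2 <= V a b c alpha (x w) - V a b c alpha (x u)); [nra|].
  apply HL. intros y hy. pose proof (pow2_abs (fst (x y))) as PA. simpl in PA.
  specialize (hr y ltac:(lra)). nra.
Qed.

Lemma lip a b c alpha wmin wmax om v x u w : wmin < 0 < wmax -> admissible wmin wmax om ->
  is_solution a b c alpha om v x ->
  Rabs (fst (x w) - fst (x u)) <= Rabs (w - u) * ((wmax - wmin) * Rabs b).
Proof.
  intros hw [_ hb] H.
  pose proof (sol_s _ _ _ _ _ _ _ H u w) as Hs.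
  apply (norm_RInt_le_const_abs _ _ _ _ ((wmax - wmin) * Rabs b)) in Hs.
  - simplR. exact Hs.
  - intros y _. simplR. unfold rhs_s. rewrite Rabs_mult.
    apply Rmult_le_compat_r; [apply Rabs_pos|].
    specialize (hb y). apply Rabs_le. lra.
Qed.

Lemma sol0 a b c alpha om v x : is_solution a b c alpha om v x -> x 0 = v.
Proof.
  intros H. destruct (H 0) as [H1 H2].
  pose proof (@is_RInt_unique R_CompleteNormedModule _ _ _ _ H1) as E1.
  pose proof (@is_RInt_unique R_CompleteNormedModule _ _ _ _ H2) as E2.
  pose proof (@is_RInt_unique R_CompleteNormedModule _ _ _ _ (is_RInt_point (fun r => rhs_s b (x r) (om r)) 0)) as E3.
  pose proof (@is_RInt_unique R_CompleteNormedModule _ _ _ _ (is_RInt_point (fun r => rhs_t a c alpha (x r) (om r)) 0)) as E4.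
  rewrite E1 in E3. rewrite E2 in E4. simplR.
  destruct (x 0) as [p1 p2], v as [v1 v2]. simpl in *. f_equal; lra.
Qed.

Lemma Rabs3 x y z : Rabs (x - y - z) <= Rabs x + Rabs y + Rabs z.
Proof. unfold Rabs; repeat destruct Rcase_abs; lra. Qed.
Lemma Rabs2 x y : Rabs (2 * x + y) <= 2 * Rabs x + Rabs y.
Proof. unfold Rabs; repeat destruct Rcase_abs; lra. Qed.

Lemma V_cont a b c alpha (q : pt) d : 0 < d -> exists eps, 0 < eps /\ forall q' : pt,
  Rabs (fst q - fst q') < eps -> Rabs (snd q - snd q') < eps ->
  Rabs (V a b c alpha q' - V a b c alpha q) < d.
Proof.
  intros hd. set (A := 2 / alpha). set (B := c / b). set (Cc := a / (2 * b)).
  set (K := Rabs A * (1 + Rabs B + Rabs Cc * (2 * Rabs (fst q) + 1))).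
  assert (hK : 0 <= K).
  { unfold K. pose proof (Rabs_pos A). pose proof (Rabs_pos B). pose proof (Rabs_pos Cc).
    pose proof (Rabs_pos (fst q)). apply Rmult_le_pos; [lra|]. nra. }
  exists (Rmin 1 (d / (K + 1))). split.
  { apply Rmin_glb_lt; [lra|]. apply Rdiv_lt_0_compat; lra. }
  intros q' h1 h2.
  set (eps := Rmin 1 (d / (K + 1))) in *.
  assert (e1 : eps <= 1) by apply Rmin_l.
  assert (e2 : eps <= d / (K + 1)) by apply Rmin_r.
  set (ds := fst q' - fst q). set (dt := snd q' - snd q).
  assert (hds : Rabs ds < eps) by (unfold ds; rewrite Rabs_minus_sym; exact h1).
  assert (hdt : Rabs dt < eps) by (unfold dt; rewrite Rabs_minus_sym; exact h2).
  assert (E : V a b c alpha q' - V a b c alpha q = A * (dt - B * ds - Cc * (ds * (2 * fst q + ds)))).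
  { unfold V, A, B, Cc, ds, dt. ring. }
  rewrite E, Rabs_mult.
  pose proof (Rabs3 dt (B * ds) (Cc * (ds * (2 * fst q + ds)))) as T.
  rewrite !Rabs_mult in T. pose proof (Rabs2 (fst q) ds) as T2.
  pose proof (Rabs_pos A). pose proof (Rabs_pos B). pose proof (Rabs_pos Cc).
  pose proof (Rabs_pos ds). pose proof (Rabs_pos (fst q)).
  pose proof (Rabs_pos (2 * fst q + ds)).
  assert (S1 : Rabs B * Rabs ds <= Rabs B * eps) by nra.
  assert (S2 : Rabs ds * Rabs (2 * fst q + ds) <= eps * (2 * Rabs (fst q) + 1)) by nra.
  assert (S3 : Rabs Cc * (Rabs ds * Rabs (2 * fst q + ds)) <= Rabs Cc * (eps * (2 * Rabs (fst q) + 1))) by nra.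
  assert (S4 : Rabs (dt - B * ds - Cc * (ds * (2 * fst q + ds))) <= eps * (1 + Rabs B + Rabs Cc * (2 * Rabs (fst q) + 1))).
  { nra. }
  assert (S5 : Rabs A * Rabs (dt - B * ds - Cc * (ds * (2 * fst q + ds))) <= eps * K).
  { unfold K. nra. }
  assert (S6 : eps * K <= d / (K + 1) * K) by nra.
  assert (S7 : d / (K + 1) * K < d).
  { apply (Rmult_lt_reg_r (K + 1)); [lra|]. field_simplify; lra. }
  lra.
Qed.

Lemma reach_V a b c alpha wmin wmax v p : alpha <> 0 -> b <> 0 ->
  reach_plus a b c alpha wmin wmax v p -> V a b c alpha v <= V a b c alpha p.
Proof.
  intros ha hb (om & x & tau & hadm & H & htau & <-).
  rewrite <- (sol0 _ _ _ _ _ _ _ H) at 1.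
  exact (V_mono _ _ _ _ _ _ _ _ _ _ _ ha hb hadm H htau).
Qed.

Lemma clos_V a b c alpha wmin wmax v q : alpha <> 0 -> b <> 0 ->
  closure2 (reach_plus a b c alpha wmin wmax v) q -> V a b c alpha v <= V a b c alpha q.
Proof.
  intros ha hb hc. destruct (Rle_lt_dec (V a b c alpha v) (V a b c alpha q)) as [h|h]; [exact h|].
  exfalso. destruct (V_cont a b c alpha q (V a b c alpha v - V a b c alpha q)) as [eps [he hq]]; [lra|].
  destruct (hc eps he) as [q' [hr [h1 h2]]].
  specialize (hq q' h1 h2). apply Rabs_def2 in hq.
  pose proof (reach_V _ _ _ _ _ _ _ _ ha hb hr). lra.
Qed.

Lemma strict1 a b c alpha wmin wmax om v x : alpha <> 0 -> b <> 0 -> wmin < 0 < wmax ->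
  admissible wmin wmax om -> is_solution a b c alpha om v x -> fst v <> 0 ->
  exists h, 0 <= h /\ V a b c alpha v < V a b c alpha (x h).
Proof.
  intros ha hb hw hadm H hv.
  set (Lc := (wmax - wmin) * Rabs b).
  assert (hL : 0 < Lc) by (unfold Lc; apply Rmult_lt_0_compat; [lra| apply Rabs_pos_lt; exact hb]).
  assert (hs : 0 < Rabs (fst v)) by (apply Rabs_pos_lt; exact hv).
  set (h := Rabs (fst v) / (2 * Lc)).
  assert (hh : 0 < h) by (unfold h; apply Rdiv_lt_0_compat; lra).
  assert (hhL : h * Lc = Rabs (fst v) / 2) by (unfold h; field; lra).
  exists h. split; [lra|].
  pose proof (sol0 _ _ _ _ _ _ _ H) as H0.
  assert (Hb : forall r, 0 <= r <= h -> Rabs (fst v) / 2 <= Rabs (fst (x r))).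
  { intros r hr. pose proof (lip _ _ _ _ _ _ _ _ _ 0 r hw hadm H) as Hl. fold Lc in Hl.
    rewrite H0 in Hl. rewrite (Rabs_right (r - 0)) in Hl by lra.
    pose proof (Rabs_triang_inv (fst v) (fst (x r))) as T.
    rewrite Rabs_minus_sym in T. nra. }
  pose proof (V_lower _ _ _ _ _ _ _ _ _ 0 h (Rabs (fst v) / 2) ha hb hadm H ltac:(lra) ltac:(lra) Hb) as HV.
  rewrite H0 in HV. assert (0 < (Rabs (fst v) / 2) ^ 2 * (h - 0)).
  { apply Rmult_lt_0_compat; [|lra]. apply pow_lt; lra. }
  lra.
Qed.

Lemma strict2 a b c alpha wmin wmax om v x tau sg : alpha <> 0 -> b <> 0 -> wmin < 0 < wmax ->
  admissible wmin wmax om -> is_solution a b c alpha om v x -> fst v = 0 -> 0 <= tau ->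
  0 < sg -> sg / 2 <= Rabs (fst (x tau)) ->
  V a b c alpha v + (sg / 4) ^ 2 * (sg / (4 * ((wmax - wmin) * Rabs b))) <= V a b c alpha (x tau).
Proof.
  intros ha hb hw hadm H hv htau hsg hst.
  set (Lc := (wmax - wmin) * Rabs b).
  assert (hL : 0 < Lc) by (unfold Lc; apply Rmult_lt_0_compat; [lra| apply Rabs_pos_lt; exact hb]).
  set (h := sg / (4 * Lc)).
  assert (hh : 0 < h) by (unfold h; apply Rdiv_lt_0_compat; lra).
  assert (hhL : h * Lc = sg / 4) by (unfold h; field; lra).
  pose proof (sol0 _ _ _ _ _ _ _ H) as H0.
  assert (htau2 : h <= tau).
  { pose proof (lip _ _ _ _ _ _ _ _ _ 0 tau hw hadm H) as Hl. fold Lc in Hl.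
    rewrite H0, hv, Rminus_0_r, Rminus_0_r, (Rabs_right tau) in Hl by lra. nra. }
  assert (Hb : forall r, tau - h <= r <= tau -> sg / 4 <= Rabs (fst (x r))).
  { intros r hr. pose proof (lip _ _ _ _ _ _ _ _ _ r tau hw hadm H) as Hl. fold Lc in Hl.
    rewrite (Rabs_right (tau - r)) in Hl by lra.
    pose proof (Rabs_triang_inv (fst (x tau)) (fst (x r))) as T. nra. }
  pose proof (V_lower _ _ _ _ _ _ _ _ _ (tau - h) tau (sg / 4) ha hb hadm H ltac:(lra) ltac:(lra) Hb) as HV.
  pose proof (V_mono _ _ _ _ _ _ _ _ _ 0 (tau - h) ha hb hadm H ltac:(lra)) as HM.
  rewrite H0 in HM. fold Lc. fold h.
  replace (tau - (tau - h)) with h in HV by ring. lra.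
Qed.

Lemma V_axis a b c alpha p p' : alpha <> 0 -> fst p = 0 -> fst p' = 0 ->
  V a b c alpha p = V a b c alpha p' -> snd p = snd p'.
Proof.
  intros ha h1 h2 E. unfold V in E. rewrite h1, h2 in E.
  apply (Rmult_eq_reg_l (2 / alpha)); [|apply Rmult_integral_contrapositive; split; [lra|apply Rinv_neq_0_compat; exact ha]].
  replace (snd p) with (snd p - c / b * 0 - a / (2 * b) * 0 ^ 2) by ring.
  replace (snd p') with (snd p' - c / b * 0 - a / (2 * b) * 0 ^ 2) by ring. exact E.
Qed.

Lemma const_sol a b c alpha t : is_solution a b c alpha (fun _ => 0) (0, t) (fun _ => (0, t)).
Proof.
  intro tau. split.
  - eapply is_RInt_val.
    + apply (is_RInt_ext (fun _ => 0)); [intros; unfold rhs_s; simpl; ring|apply is_RInt_const].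
    + simplR. simpl. ring.
  - eapply is_RInt_val.
    + apply (is_RInt_ext (fun _ => 0)); [intros; unfold rhs_t; simpl; ring|apply is_RInt_const].
    + simplR. simpl. ring.
Qed.

Lemma const_adm wmin wmax : wmin < 0 < wmax -> admissible wmin wmax (fun _ => 0).
Proof.
  intros hw. split.
  - intros lo hi. exists nil. intros; reflexivity.
  - intros; lra.
Qed.

Theorem proposition7 (a b c alpha wmin wmax : R) :
  alpha <> 0 -> b <> 0 -> wmin < 0 < wmax ->
  forall C : pt -> Prop,
    control_set a b c alpha wmin wmax C <->
    exists t : R, forall p : pt, C p <-> p = (0, t).
Proof.
  intros ha hb hw C. split.
  - intros [[[p0 Hp0] [Hinv Happ]] _].
    assert (Hax : forall p, C p -> fst p = 0).
    { intros p Hp. destruct (Req_dec (fst p) 0) as [e|ne]; [exact e|exfalso].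
      destruct (Hinv p Hp) as (om & x & hadm & H & Hst).
      destruct (strict1 _ _ _ _ _ _ _ _ _ ha hb hw hadm H ne) as [h [hh hV]].
      pose proof (clos_V _ _ _ _ _ _ _ _ ha hb (Happ (x h) (Hst h hh) p Hp)). lra. }
    exists (snd p0). intros p. split.
    + intros Hp. destruct p as [s t]. pose proof (Hax _ Hp) as e1. simpl in e1. subst s.
      f_equal.
      pose proof (clos_V _ _ _ _ _ _ _ _ ha hb (Happ _ Hp _ Hp0)).
      pose proof (clos_V _ _ _ _ _ _ _ _ ha hb (Happ _ Hp0 _ Hp)).
      apply (V_axis a b c alpha (0, t) p0 ha eq_refl (Hax _ Hp0)). lra.
    + intros ->. destruct p0 as [s0 t0]. pose proof (Hax _ Hp0) as e. simpl in e. subst s0. exact Hp0.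
  - intros [t Ht].
    assert (Ct : C (0, t)) by (apply Ht; reflexivity).
    assert (Hcl : closure2 (reach_plus a b c alpha wmin wmax (0, t)) (0, t)).
    { intros eps he. exists (0, t). split.
      - exists (fun _ => 0), (fun _ => (0, t)), 0. split; [apply const_adm; exact hw|].
        split; [apply const_sol|]. split; [lra|reflexivity].
      - simpl. rewrite !Rminus_eq_0, Rabs_R0. lra. }
    split; [split; [exists (0, t); exact Ct|split]|].
    + intros p Hp. apply Ht in Hp. subst p.
      exists (fun _ => 0), (fun _ => (0, t)). split; [apply const_adm; exact hw|].
      split; [apply const_sol|]. intros; exact Ct.
    + intros p Hp q Hq. apply Ht in Hp. apply Ht in Hq. subst p q. exact Hcl.
    + intros D [_ [_ HappD]] Hsub p Hp. apply Ht.
      pose proof (Hsub _ Ct) as Dt.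
      pose proof (clos_V _ _ _ _ _ _ _ _ ha hb (HappD _ Dt _ Hp)) as V1.
      pose proof (clos_V _ _ _ _ _ _ _ _ ha hb (HappD _ Hp _ Dt)) as V2.
      assert (Hf : fst p = 0).
      { destruct (Req_dec (fst p) 0) as [e|ne]; [exact e|exfalso].
        set (sg := Rabs (fst p)).
        assert (hsg : 0 < sg) by (apply Rabs_pos_lt; exact ne).
        set (dl := (sg / 4) ^ 2 * (sg / (4 * ((wmax - wmin) * Rabs b)))).
        assert (hdl : 0 < dl).
        { unfold dl. apply Rmult_lt_0_compat; [apply pow_lt; lra|].
          apply Rdiv_lt_0_compat; [lra|]. apply Rmult_lt_0_compat; [lra|].
          apply Rmult_lt_0_compat; [lra|apply Rabs_pos_lt; exact hb]. }
        destruct (V_cont a b c alpha p dl hdl) as [e1 [he1 Hc]].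
        destruct (HappD _ Dt _ Hp (Rmin e1 (sg / 2))) as [q [Hr [h1 h2]]].
        { apply Rmin_glb_lt; lra. }
        pose proof (Rmin_l e1 (sg / 2)) as m1. pose proof (Rmin_r e1 (sg / 2)) as m2.
        specialize (Hc q ltac:(lra) ltac:(lra)). apply Rabs_def2 in Hc.
        destruct Hr as (om & x & tau & hadm & H & htau & <-).
        pose proof (Rabs_triang_inv (fst p) (fst (x tau))) as T.
        pose proof (sol0 _ _ _ _ _ _ _ H) as H0.
        pose proof (strict2 _ _ _ _ _ _ _ _ _ tau sg ha hb hw hadm H eq_refl htau hsg ltac:(fold sg in T; lra)) as S.
        fold dl in S. lra. }
      destruct p as [s t']. simpl in Hf. subst s. f_equal.
      apply (V_axis a b c alpha (0, t') (0, t) ha eq_refl eq_refl). lra.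
Qed.
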